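(* Let $\mathcal G$ be a 2-group such that the sets of objects $\mathcal G_0$, morphisms $\mathcal G_1$ and composable morphisms are manifolds, all structure maps (source $s$, target $t$, identity, composition) are smooth, and the multiplication functor $\otimes$, the inversion functor $\overline{\,\cdot\,}$ and the associator $\alpha$ are smooth. If $s^{-1}(\mathbb1)\subseteq\mathcal G_1$ is discrete in the induced topology, then the map $(\mathcal G_0)^3\to s^{-1}(\mathbb1)$, $(g,h,k)\mapsto\alpha(g,h,k)\otimes\mathrm{id}_{\overline{(g\otimes h)\otimes k}}$, is locally constant.
   Context: Manifolds are modelled on locally convex spaces. A 2-group is a small category $\mathcal G$ with a multiplication functor $\otimes\colon\mathcal G\times\mathcal G\to\mathcal G$, an inversion functor $\overline{\,\cdot\,}\colon\mathcal G\to\mathcal G$, a unit object $\mathbb1$ and natural isomorphisms (associators) $\alpha(g,h,k)=\alpha_{g,h,k}\colon(g\otimes h)\otimes k\to g\otimes(h\otimes k)$ such that $g\otimes\mathbb1=g=\mathbb1\otimes g$ and $g\otimes\overline g=\mathbb1=\overline g\otimes g$ on objects and morphisms (with $\mathbb 1$ identified with $\mathrm{id}_{\mathbb1}$), $\alpha$ satisfies the pentagon identity $\alpha_{g,h,k\otimes l}\circ\alpha_{g\otimes h,k,l}=(\mathrm{id}_g\otimes\alpha_{h,k,l})\circ\alpha_{g,h\otimes k,l}\circ(\alpha_{g,h,k}\otimes\mathrm{id}_l)$, $\alpha_{g,h,k}$ is an identity if one of $g,h,k$ is $\mathbb1$, and $\alpha_{g,\overline g,g}=\mathrm{id}_g$,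 $\alpha_{\overline g,g,\overline g}=\mathrm{id}_{\overline g}$. *)

(* Defs.v *)
From HB Require Import structures.
From mathcomp Require Import all_boot all_order all_algebra.
From mathcomp Require Import all_classical all_reals all_analysis.
Set Implicit Arguments. Unset Strict Implicit. Unset Printing Implicit Defensive.
Import Order.TTheory GRing.Theory Num.Theory.
Local Open Scope classical_set_scope.
Local Open Scope ring_scope.

Section Bastiani.
Variable R : realType.

Definition diffquot (E F : tvsType R) (f : E -> F) (x v : E) : R -> F :=
  fun t => t^-1 *: (f (x + t *: v) - f x).

Definition dir_derivable (E F : tvsType R) (f : E -> F) (x v : E) : Prop :=
  exists l : F, diffquot f x v t @[t --> 0^'] --> l.

(* the directional derivative df(x)(v): a (for Hausdorff F, the) limit of the
   difference quotient as t -> 0, t <> 0; 0 if there is none *)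
Definition ddiff (E F : tvsType R) (f : E -> F) (x v : E) : F :=
  match pselect (dir_derivable f x v) with
  | left h => proj1_sig (cid h)
  | right _ => 0
  end.

(* Bastiani C^k on a set U: f continuous on U, and (for k >= 1) all directional
   derivatives exist on U and df : U x E -> F is C^(k-1). *)
Fixpoint Ck (k : nat) (E F : tvsType R) (U : set E) (f : E -> F) {struct k} : Prop :=
  {within U, continuous f} /\
  match k with
  | 0 => True
  | k'.+1 => (forall x v, U x -> dir_derivable f x v) /\
             Ck k' (U `*` [set: E]) (fun p : E * E => ddiff f p.1 p.2)
  end.

Definition smooth_on (E F : tvsType R) (U : set E) (f : E -> F) : Prop :=
  open U /\ forall k, Ck k U f.

Record chart (E : tvsType R) (M : Type) := Chart {
  ch_dom : set M; ch_map : M -> E; ch_inv : E -> M }.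

Definition atlas_open (E : tvsType R) (M : Type) (A : set (chart E M)) (B : set M) :=
  forall c, A c -> open (ch_map c @` (B `&` ch_dom c)).

Definition is_manifold (E : tvsType R) (M : Type) (A : set (chart E M)) : Prop :=
  [/\ hausdorff_space E,
      (forall x : M, exists2 c, A c & ch_dom c x),
      (forall c, A c -> forall x, ch_dom c x -> ch_inv c (ch_map c x) = x),
      (forall c d, A c -> A d ->
          smooth_on (ch_map c @` (ch_dom c `&` ch_dom d)) (ch_map d \o ch_inv c))
    & (forall x y : M, x <> y -> exists B1 B2,
          [/\ atlas_open A B1, atlas_open A B2, B1 x, B2 y & B1 `&` B2 = set0])].

Definition smooth_map (E F : tvsType R) (M N : Type)
    (A : set (chart E M)) (B : set (chart F N)) (f : M -> N) : Prop :=
  (forall W, atlas_open B W -> atlas_open A (f @^-1` W)) /\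
  (forall c d, A c -> B d ->
     smooth_on (ch_map c @` (ch_dom c `&` f @^-1` ch_dom d))
               (ch_map d \o f \o ch_inv c)).

Definition prod_chart (E F : tvsType R) (M N : Type) (c : chart E M) (d : chart F N)
  : chart (E * F)%type (M * N)%type :=
  Chart (ch_dom c `*` ch_dom d)
        (fun p => (ch_map c p.1, ch_map d p.2))
        (fun q => (ch_inv c q.1, ch_inv d q.2)).

Definition prod_atlas (E F : tvsType R) (M N : Type)
    (A : set (chart E M)) (B : set (chart F N)) : set (chart (E * F)%type (M * N)%type) :=
  [set prod_chart c d | c in A & d in B].

End Bastiani.

(* The structure maps of a (strict-unit, strict-inverse) 2-group *)
Record twogroup_ops (G0 G1 : Type) := TwoGroupOps {
  g2src : G1 -> G0;
  g2tgt : G1 -> G0;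
  g2idm : G0 -> G1;
  g2mcomp : G1 -> G1 -> G1;         (* g2mcomp g f = g o f, when g2src g = g2tgt f *)
  g2tens0 : G0 -> G0 -> G0;
  g2tens1 : G1 -> G1 -> G1;
  g2inv0 : G0 -> G0;
  g2inv1 : G1 -> G1;
  g2one : G0;
  g2assoc : G0 -> G0 -> G0 -> G1 }.

Section TwoGroup.
Variables (G0 G1 : Type) (o : twogroup_ops G0 G1).
Local Notation s := (g2src o). Local Notation t := (g2tgt o).
Local Notation id := (g2idm o). Local Notation c := (g2mcomp o).
Local Notation m0 := (g2tens0 o). Local Notation m1 := (g2tens1 o).
Local Notation i0 := (g2inv0 o). Local Notation i1 := (g2inv1 o).
Local Notation e := (g2one o). Local Notation a := (g2assoc o).

Definition category_axioms : Prop :=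
  [/\ (forall x, s (id x) = x /\ t (id x) = x),
      (forall g f, s g = t f -> s (c g f) = s f /\ t (c g f) = t g),
      (forall f, c f (id (s f)) = f /\ c (id (t f)) f = f)
    & (forall h g f, s h = t g -> s g = t f -> c h (c g f) = c (c h g) f)].

Definition tensor_functor : Prop :=
  [/\ (forall f g, s (m1 f g) = m0 (s f) (s g) /\ t (m1 f g) = m0 (t f) (t g)),
      (forall x y, m1 (id x) (id y) = id (m0 x y))
    & (forall f' f g' g, s f' = t f -> s g' = t g ->
          m1 (c f' f) (c g' g) = c (m1 f' g') (m1 f g))].

Definition inversion_functor : Prop :=
  [/\ (forall f, s (i1 f) = i0 (s f) /\ t (i1 f) = i0 (t f)),
      (forall x, i1 (id x) = id (i0 x))
    & (forall g f, s g = t f -> i1 (c g f) = c (i1 g) (i1 f))].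

Definition strict_unit_inverse : Prop :=
  [/\ (forall g, m0 g e = g /\ m0 e g = g),
      (forall f, m1 f (id e) = f /\ m1 (id e) f = f),
      (forall g, m0 g (i0 g) = e /\ m0 (i0 g) g = e)
    & (forall f, m1 f (i1 f) = id e /\ m1 (i1 f) f = id e)].

Definition associator_axioms : Prop :=
  [/\ (forall g h k, s (a g h k) = m0 (m0 g h) k /\ t (a g h k) = m0 g (m0 h k)),
      (forall g h k, exists b, [/\ s b = m0 g (m0 h k), t b = m0 (m0 g h) k,
                                   c b (a g h k) = id (m0 (m0 g h) k)
                                 & c (a g h k) b = id (m0 g (m0 h k))]),
      (forall f1 f2 f3,
          c (a (t f1) (t f2) (t f3)) (m1 (m1 f1 f2) f3)
          = c (m1 f1 (m1 f2 f3)) (a (s f1) (s f2) (s f3))),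
      (forall g h k l,
          c (a g h (m0 k l)) (a (m0 g h) k l)
          = c (m1 (id g) (a h k l)) (c (a g (m0 h k) l) (m1 (a g h k) (id l))))
    & (forall g h, [/\ a e g h = id (m0 g h), a g e h = id (m0 g h),
                        a g h e = id (m0 g h), a g (i0 g) g = id g
                      & a (i0 g) g (i0 g) = id (i0 g)])].

Definition is_2group : Prop :=
  [/\ category_axioms, tensor_functor, inversion_functor,
      strict_unit_inverse & associator_axioms].

End TwoGroup.

Definition composable (G0 G1 : Type) (o : twogroup_ops G0 G1) :=
  {p : G1 * G1 | g2src o p.1 = g2tgt o p.2}.

(* Main.v *)
Require Import Defs.
From HB Require Import structures.
From mathcomp Require Import all_boot all_order all_algebra.
From mathcomp Require Import all_classical all_reals all_analysis.
Import Order.TTheory GRing.Theory Num.Theory.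
Local Open Scope classical_set_scope.
Local Open Scope ring_scope.

Section Helpers.
Variable R : realType.
Set Implicit Arguments. Unset Strict Implicit.

Definition acont (E F : tvsType R) (M N : Type) (A : set (chart E M))
  (B : set (chart F N)) (f : M -> N) :=
  forall W, atlas_open B W -> atlas_open A (f @^-1` W).

Definition chinj (E : tvsType R) (M : Type) (A : set (chart E M)) :=
  forall c, A c -> forall x, ch_dom c x -> ch_inv c (ch_map c x) = x.

Lemma nbhs_open (E : tvsType R) (P : set E) x : open P -> P x -> nbhs x P.
Proof. by rewrite openE => oP /oP. Qed.

Lemma openX_ (E F : tvsType R) (P : set E) (Q : set F) :
  open P -> open Q -> open (P `*` Q).
Proof.
move=> oP oQ; rewrite openE => -[a b] [/= Pa Qb].
exists (P, Q); [split; [exact: (nbhs_open oP Pa)|exact: (nbhs_open oQ Qb)]|by move=> [x y] []].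
Qed.

Definition doms_open (E : tvsType R) (M : Type) (A : set (chart E M)) :=
  forall c, A c -> open (ch_map c @` ch_dom c).

Lemma open_dom (E : tvsType R) (M : Type) (A : set (chart E M)) :
  is_manifold A -> doms_open A.
Proof.
move=> [_ _ _ Htr _] c Ac; have [+ _] := Htr c c Ac Ac.
by rewrite setIid.
Qed.

Lemma doms_open_prod (E F : tvsType R) (M N : Type) (A : set (chart E M)) (B : set (chart F N)) :
  doms_open A -> doms_open B -> doms_open (prod_atlas A B).
Proof.
move=> hA hB _ [c Ac [d Bd <-]].
have -> : ch_map (prod_chart c d) @` ch_dom (prod_chart c d)
   = (ch_map c @` ch_dom c) `*` (ch_map d @` ch_dom d).
  apply/seteqP; split.
  - by move=> _ [[x y] [/= dx dy] <-]; split; [exists x|exists y].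
  - move=> [a b] [/= [x dx ea] [y dy eb]].
    by exists (x, y); rewrite //= ea eb.
by apply: openX_; [exact: hA|exact: hB].
Qed.

Lemma manifold_chinj (E : tvsType R) (M : Type) (A : set (chart E M)) :
  is_manifold A -> chinj A.
Proof. by case. Qed.

Lemma chart_pre_open (E : tvsType R) (M : Type) (A : set (chart E M)) c (U : set E) :
  is_manifold A -> A c -> open U ->
  atlas_open A [set y | ch_dom c y /\ U (ch_map c y)].
Proof.
move=> [_ _ Hinj Htr _] Ac oU c' Ac'.
have [oD Hk] := Htr c' c Ac' Ac.
have [ct _] := Hk 0%N.
rewrite (continuous_open_subspace _ oD) in ct.
have := (continuous_inP _ oD).1 ct _ oU.
match goal with |- open ?X -> open ?Y => have <- : X = Y end => //.
apply/seteqP; split.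
- move=> z [[y [dy' dy] <-]]; rewrite /= Hinj // => Uy.
  by exists y.
- move=> z [y [[dy Uy] dy'] <-]; split; first by exists y.
  by rewrite /= Hinj.
Qed.

Lemma acont_comp (E F G : tvsType R) (M N P : Type) (A : set (chart E M))
  (B : set (chart F N)) (C : set (chart G P)) f g :
  acont A B f -> acont B C g -> acont A C (g \o f).
Proof. by move=> hf hg W /hg /hf. Qed.

Lemma chinj_prod (E F : tvsType R) (M N : Type) (A : set (chart E M)) (B : set (chart F N)) :
  chinj A -> chinj B -> chinj (prod_atlas A B).
Proof.
move=> hA hB _ [c Ac [d Bd <-]] [x y] [/= dx dy].
by rewrite /= hA // hB.
Qed.

Lemma acont_fst (E F : tvsType R) (M N : Type) (A : set (chart E M)) (B : set (chart F N)) :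
  doms_open B -> acont (prod_atlas A B) A fst.
Proof.
move=> hB W hW _ [c Ac [d Bd <-]].
have -> : ch_map (prod_chart c d) @` (fst @^-1` W `&` ch_dom (prod_chart c d))
   = (ch_map c @` (W `&` ch_dom c)) `*` (ch_map d @` ch_dom d).
  apply/seteqP; split.
  - by move=> _ [[x y] [/= Wx [dx dy]] <-]; split; [exists x|exists y].
  - move=> [a b] [/= [x [Wx dx] ea] [y dy eb]].
    by exists (x, y); rewrite //= ea eb.
by apply: openX_; [exact: hW|exact: hB].
Qed.

Lemma acont_snd (E F : tvsType R) (M N : Type) (A : set (chart E M)) (B : set (chart F N)) :
  doms_open A -> acont (prod_atlas A B) B snd.
Proof.
move=> hA W hW _ [c Ac [d Bd <-]].
have -> : ch_map (prod_chart c d) @` (snd @^-1` W `&` ch_dom (prod_chart c d))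
   = (ch_map c @` ch_dom c) `*` (ch_map d @` (W `&` ch_dom d)).
  apply/seteqP; split.
  - by move=> _ [[x y] [/= Wx [dx dy]] <-]; split; [exists x|exists y].
  - move=> [a b] [/= [x dx ea] [y [Wy dy] eb]].
    by exists (x, y); rewrite //= ea eb.
by apply: openX_; [exact: hA|exact: hW].
Qed.

Lemma acont_pair (E F G : tvsType R) (M N K : Type) (A : set (chart E M))
  (B : set (chart F N)) (C : set (chart G K)) u v :
  chinj A -> is_manifold B -> is_manifold C ->
  acont A B u -> acont A C v -> acont A (prod_atlas B C) (fun x => (u x, v x)).
Proof.
move=> hA hB hC hu hv W hW e Ae; rewrite openE => _ [x [Wx dx] <-].
have [_ covB injB _ _] := hB; have [_ covC injC _ _] := hC.
have [c Bc dcu] := covB (u x); have [d Cd ddv] := covC (v x).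
have oO := hW (prod_chart c d) (ex_intro2 _ _ c Bc (ex_intro2 _ _ d Cd erefl)).
have Ox : (ch_map (prod_chart c d) @` (W `&` ch_dom (prod_chart c d)))
            (ch_map c (u x), ch_map d (v x)).
  by exists (u x, v x).
move: oO; rewrite openE => /(_ _ Ox); rewrite /interior.
move=> [[P Q] [/= nP nQ] sPQ].
set W1 := [set y | ch_dom c y /\ P° (ch_map c y)].
set W2 := [set y | ch_dom d y /\ Q° (ch_map d y)].
have oW1 : atlas_open B W1 by apply: chart_pre_open => //; exact: open_interior.
have oW2 : atlas_open C W2 by apply: chart_pre_open => //; exact: open_interior.
have o1 := hu _ oW1 e Ae; have o2 := hv _ oW2 e Ae.
have n1 : nbhs (ch_map e x) (ch_map e @` (u @^-1` W1 `&` ch_dom e)).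
  apply: nbhs_open => //; exists x => //; split => //; split => //.
have n2 : nbhs (ch_map e x) (ch_map e @` (v @^-1` W2 `&` ch_dom e)).
  apply: nbhs_open => //; exists x => //; split => //; split => //.
apply: filterS (filterI n1 n2).
move=> z [[y1 [[dy1 Py1] de1] <-] [y2 [[dy2 Qy2] de2] e12]].
have y12 : y2 = y1 by rewrite -(hA _ Ae _ de1) -e12 hA.
subst y2.
have : (P `*` Q) (ch_map c (u y1), ch_map d (v y1)).
  by split; apply: interior_subset.
move=> /sPQ [[a b] [Wab [/= da db]] [ea eb]].
exists y1 => //; split => //=.
by rewrite -(injB _ Bc _ dy1) -ea injB // -(injC _ Cd _ dy2) -eb injC.
Qed.

End Helpers.

Theorem lemma2p6 (R : realType) (G0 G1 : Type) (o : twogroup_ops G0 G1)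
  (E0 E1 Ec : tvsType R)
  (A0 : set (chart E0 G0)) (A1 : set (chart E1 G1))
  (Ac : set (chart Ec (composable o)))
  (H2 : is_2group o)
  (HM0 : is_manifold A0) (HM1 : is_manifold A1) (HMc : is_manifold Ac)
  (Hs : smooth_map A1 A0 (g2src o)) (Ht : smooth_map A1 A0 (g2tgt o))
  (Hid : smooth_map A0 A1 (g2idm o))
  (Hcomp : smooth_map Ac A1 (fun p : composable o => g2mcomp o (sval p).1 (sval p).2))
  (Hm0 : smooth_map (prod_atlas A0 A0) A0 (fun p : G0 * G0 => g2tens0 o p.1 p.2))
  (Hm1 : smooth_map (prod_atlas A1 A1) A1 (fun p : G1 * G1 => g2tens1 o p.1 p.2))
  (Hi0 : smooth_map A0 A0 (g2inv0 o)) (Hi1 : smooth_map A1 A1 (g2inv1 o))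
  (Ha : smooth_map (prod_atlas (prod_atlas A0 A0) A0) A1
          (fun p : (G0 * G0) * G0 => g2assoc o p.1.1 p.1.2 p.2))
  (Hdisc : forall f : G1, g2src o f = g2one o ->
     exists B : set G1, atlas_open A1 B /\ B `&` (g2src o @^-1` [set g2one o]) = [set f]) :
  let F := fun p : (G0 * G0) * G0 =>
    g2tens1 o (g2assoc o p.1.1 p.1.2 p.2)
            (g2idm o (g2inv0 o (g2tens0 o (g2tens0 o p.1.1 p.1.2) p.2))) in
  forall p : (G0 * G0) * G0, exists B : set ((G0 * G0) * G0),
    [/\ atlas_open (prod_atlas (prod_atlas A0 A0) A0) B, B p
      & forall q, B q -> F q = F p].
Proof.
move=> F p.
have [[cat1 _ _ _] [tens1 _ _] _ [_ _ sui3 _] [assoc1 _ _ _ _]] := H2.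
have sF : forall q, g2src o (F q) = g2one o.
  move=> [[g h] k]; rewrite /F /= (tens1 _ _).1 (assoc1 _ _ _).1 (cat1 _).1.
  exact: (sui3 _).1.
have dO0 := open_dom HM0.
have cT : chinj (prod_atlas (prod_atlas A0 A0) A0).
  by apply: chinj_prod; [apply: chinj_prod|]; exact: manifold_chinj.
have h1 : acont (prod_atlas (prod_atlas A0 A0) A0) A0
    (fun q : (G0 * G0) * G0 => g2tens0 o q.1.1 q.1.2).
  exact: (acont_comp (acont_fst (A:=prod_atlas A0 A0) dO0) Hm0.1).
have h2 : acont (prod_atlas (prod_atlas A0 A0) A0) A0
    (fun q : (G0 * G0) * G0 => q.2).
  exact: (acont_snd (B:=A0) (doms_open_prod dO0 dO0)).
have h3 := acont_pair cT HM0 HM0 h1 h2.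
have h4 : acont (prod_atlas (prod_atlas A0 A0) A0) A1
    (fun q : (G0 * G0) * G0 =>
       g2idm o (g2inv0 o (g2tens0 o (g2tens0 o q.1.1 q.1.2) q.2))).
  exact: (acont_comp (acont_comp (acont_comp h3 Hm0.1) Hi0.1) Hid.1).
have h5 := acont_pair cT HM1 HM1 Ha.1 h4.
have hF : acont (prod_atlas (prod_atlas A0 A0) A0) A1 F.
  exact: (acont_comp h5 Hm1.1).
have [B [oB hB]] := Hdisc (F p) (sF p).
exists (F @^-1` B); split.
- exact: hF.
- have : (B `&` (g2src o @^-1` [set g2one o])) (F p) by rewrite hB.
  by case.
- move=> q Bq.
  have : (B `&` (g2src o @^-1` [set g2one o])) (F q) by split => //; exact: sF.
  by rewrite hB.
Qed.
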